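(* If $G$ is an optimal digraph and $(u,v)$ is a shortest non-edge of $G$, then $N^+(v) \cap N^-(u) \neq \emptyset$.
   Context: Digraphs are finite, loopless, with at most one edge $uv$ per ordered pair. $N^+(v)=\{u: vu\in E(G)\}$, $N^-(v)=\{u:uv\in E(G)\}$. A digraph is $2$-free if no distinct $u,v$ have both $uv,vu$ as edges. A circular interval digraph is a digraph together with a fixed arrangement of its vertices in a circle such that for all distinct $u,v,w$ in clockwise order with $uw\in E(G)$, also $uv,vw\in E(G)$. For distinct $u,v$, $d(u,v) = 1 + |\{w: u,w,v \text{ distinct, in clockwise order}\}|$; this is the length of the ordered pair $uv$. A non-edge is an ordered pair $(u,v)$ of distinct vertices with neither $uv$ nor $vu$ an edge; its length is $d(u,v)$. $\alpha_G$ is the minimum length of a non-edge ($\infty$ if none); a shortest non-edge is a non-edge of length $\alpha_G$. $\xi(G)$ is the number of pairs $(uv,(w,x))$ with $uv\in E(G)$, $(w,x)$ a non-edge, $d(u,v)>d(w,x)$. $\tilde P_3(G)$ is the number of triples $(a,b,c)$ of distinct vertices with $ab,bc\in E(G)$ and $ac,ca\notin E(G)$. For fixed $n\ge 4$, $G$ is optimal if it is a $2$-free circular interval digraph on $n$ vertices maximizing $\tilde P_3$ among all such digraphs and, subject to this, minimizing $\xi(G)$. *)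

(* Defs.v *)
From mathcomp Require Import all_boot.
Set Implicit Arguments. Unset Strict Implicit. Unset Printing Implicit Defensive.

(* Digraphs on the vertex set 'I_n; the fixed circular arrangement places
   vertex i at position i, clockwise order = increasing index modulo n.
   A digraph is given by its edge relation E : rel 'I_n. *)

(* d(u,v) = 1 + #{w : u,w,v distinct in clockwise order} = (v - u) mod n. *)
Definition cdist (n : nat) (u v : 'I_n) : nat := (v + n - u) %% n.

Definition cw (n : nat) (u v w : 'I_n) : bool :=
  [&& u != v, v != w, u != w & cdist u v < cdist u w].

Definition loopless (n : nat) (E : rel 'I_n) : Prop := forall u, ~~ E u u.

Definition two_free (n : nat) (E : rel 'I_n) : Prop :=
  forall u v, u != v -> ~~ (E u v && E v u).

Definition circ_interval (n : nat) (E : rel 'I_n) : Prop :=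
  forall u v w, cw u v w -> E u w -> E u v && E v w.

Definition valid_digraph (n : nat) (E : rel 'I_n) : Prop :=
  loopless E /\ two_free E /\ circ_interval E.

Definition nonedge (n : nat) (E : rel 'I_n) (u v : 'I_n) : bool :=
  [&& u != v, ~~ E u v & ~~ E v u].

Definition shortest_nonedge (n : nat) (E : rel 'I_n) (u v : 'I_n) : Prop :=
  nonedge E u v /\ forall w x, nonedge E w x -> cdist u v <= cdist w x.

Definition xi (n : nat) (E : rel 'I_n) : nat :=
  #|[set p : ('I_n * 'I_n) * ('I_n * 'I_n) |
      [&& E p.1.1 p.1.2, nonedge E p.2.1 p.2.2 &
          cdist p.2.1 p.2.2 < cdist p.1.1 p.1.2]]|.

Definition P3 (n : nat) (E : rel 'I_n) : nat :=
  #|[set t : 'I_n * 'I_n * 'I_n |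
      [&& t.1.1 != t.1.2, t.1.2 != t.2, t.1.1 != t.2,
          E t.1.1 t.1.2, E t.1.2 t.2, ~~ E t.1.1 t.2 & ~~ E t.2 t.1.1]]|.

Definition optimal (n : nat) (E : rel 'I_n) : Prop :=
  valid_digraph E /\
  (forall E' : rel 'I_n, valid_digraph E' -> P3 E' <= P3 E) /\
  (forall E' : rel 'I_n, valid_digraph E' -> P3 E' = P3 E -> xi E <= xi E').

(* Main.v *)
Require Import Defs.
From mathcomp Require Import all_boot zify.
Set Implicit Arguments. Unset Strict Implicit.

Lemma cdS n (x y : 'I_n) :
  (x <= y /\ cdist x y = y - x) \/ (y < x /\ cdist x y = y + n - x).
Proof.
have hx := ltn_ord x; have hy := ltn_ord y.
rewrite /cdist; case: (leqP x y) => h; [left|right]; split => //.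
  have -> : y + n - x = (y - x) + n by lia.
  by rewrite modnDr modn_small //; lia.
by rewrite modn_small //; lia.
Qed.

Definition sh n (x : 'I_n) (j : nat) : 'I_n :=
  @Ordinal n ((x + j) %% n) (ltn_pmod _ (leq_ltn_trans (leq0n x) (ltn_ord x))).

Lemma shS n (x : 'I_n) j : j < n ->
  (x + j < n /\ nat_of_ord (sh x j) = x + j) \/ (n <= x + j /\ nat_of_ord (sh x j) = x + j - n).
Proof.
move=> hj; have hx := ltn_ord x; rewrite /sh /=; case: (ltnP (x + j) n) => h; [left|right]; split => //.
  by rewrite modn_small.
have e : x + j = (x + j - n) + n by lia.
by rewrite e modnDr modn_small; lia.
Qed.

Lemma cwE n (x y z : 'I_n) : cw x y z =
  [&& nat_of_ord x != y, nat_of_ord y != z, nat_of_ord x != z & cdist x y < cdist x z].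
Proof. by rewrite /cw -!val_eqE. Qed.

Definition p3p n (E : rel 'I_n) (t : 'I_n * 'I_n * 'I_n) : bool :=
  [&& t.1.1 != t.1.2, t.1.2 != t.2, t.1.1 != t.2,
      E t.1.1 t.1.2, E t.1.2 t.2, ~~ E t.1.1 t.2 & ~~ E t.2 t.1.1].
Definition S3 n (E : rel 'I_n) := [set t | p3p E t].
Lemma P3E n (E : rel 'I_n) : P3 E = #|S3 E|.
Proof. by []. Qed.

Lemma P3_lt n (E E' : rel 'I_n) :
  #|S3 E :\: S3 E'| < #|S3 E' :\: S3 E| -> P3 E < P3 E'.
Proof.
rewrite !P3E => h.
have h1 := cardsID (S3 E') (S3 E).
have h2 := cardsID (S3 E) (S3 E').
rewrite setIC in h2. lia.
Qed.

Definition addE n (E : rel 'I_n) (x y : 'I_n) : rel 'I_n :=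
  fun a b => E a b || (a == x) && (b == y).

Lemma valid_add n (E : rel 'I_n) x y : valid_digraph E -> x != y -> ~~ E y x ->
  (forall w, cw x w y -> E x w && E w y) -> valid_digraph (addE E x y).
Proof.
move=> [Hl [H2 Hc]] hxy hyx hb; split; [|split].
- move=> a; rewrite /addE (negbTE (Hl a)) /=; apply/negP => /andP [/eqP -> /eqP e].
  by rewrite e eqxx in hxy.
- move=> a b hab; rewrite /addE; apply/negP => /andP [h1 h2].
  move: h1 h2; case: (boolP (E a b)) => eab; case: (boolP (E b a)) => eba /=.
  + by move: (H2 a b hab); rewrite eab eba.
  + by move=> _ /andP [/eqP e1 /eqP e2]; subst; rewrite eab in hyx.
  + by move=> /andP [/eqP e1 /eqP e2]; subst; rewrite eba in hyx.
  + move=> /andP [/eqP e1 /eqP e2] /andP [/eqP e3 /eqP e4].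
    by rewrite e1 e3 eqxx in hab.
- move=> a w c hcw; rewrite /addE => /orP [h | /andP [/eqP e1 /eqP e2]].
    by case/andP: (Hc _ _ _ hcw h) => -> ->.
  subst; by case/andP: (hb _ hcw) => -> ->.
Qed.

Lemma X_char n (E : rel 'I_n) x y t : t \in S3 E :\: S3 (addE E x y) ->
  ((t.1.1 = x /\ t.2 = y) \/ (t.1.1 = y /\ t.2 = x)) /\ E t.1.1 t.1.2 /\ E t.1.2 t.2.
Proof.
case: t => [[a b] c]; rewrite !inE /p3p /addE /=.
case/andP => hn /and5P [h1 h2 h3 h4 /and3P [h5 h6 h7]].
move: hn; rewrite h1 h2 h3 h4 h5 /= (negbTE h6) (negbTE h7) /=.
rewrite negb_and !negbK => /orP [/andP [/eqP -> /eqP ->] | /andP [/eqP -> /eqP ->]].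
  by split => //; left.
by split => //; right.
Qed.

Lemma inY n (E E' : rel 'I_n) a b c : a != b -> b != c -> a != c ->
  E' a b -> E' b c -> ~~ E' a c -> ~~ E' c a -> ~~ (E a b && E b c) ->
  (a, b, c) \in S3 E' :\: S3 E.
Proof.
move=> h1 h2 h3 h4 h5 h6 h7 h8; rewrite !inE /p3p /= h1 h2 h3 h4 h5 h6 h7 /= andbT.
by apply: contra h8 => /and4P [-> -> _ _].
Qed.

Lemma ordE n (x y : 'I_n) : (x == y) = (nat_of_ord x == nat_of_ord y).
Proof. by []. Qed.

Ltac ltord := repeat match goal with
  | x : ordinal _ |- _ => let h := fresh "lo" in have h := ltn_ord x; move: h; revert x
  end; intros.

Lemma sh_succ n (v : 'I_n) k : sh (sh v k) 1 = sh v k.+1.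
Proof. apply: val_inj => /=. by rewrite modnDml addn1 addnS. Qed.

Lemma sh_cd n (v a : 'I_n) : sh v (cdist v a) = a.
Proof.
apply: val_inj => /=; rewrite /cdist modnDmr.
have hv := ltn_ord v; have ha := ltn_ord a.
have -> : v + (a + n - v) = a + n by lia.
by rewrite modnDr modn_small.
Qed.

Lemma iso_contra n (hn : 4 <= n) (E : rel 'I_n) (v : 'I_n) :
  optimal E -> (forall x, ~~ E v x && ~~ E x v) -> False.
Proof.
move=> [Hv [Hmax _]] Hiso.
have Hv' := Hv; move: Hv' => [Hl [H2 Hc]].
pose iso y := [forall x, ~~ E y x && ~~ E x y].
have isoP y : iso y -> forall x, ~~ E y x && ~~ E x y by move/forallP.
pose o0 : 'I_n := Ordinal (ltn_trans (isT : 0 < 3) hn).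
pose o1 : 'I_n := Ordinal (ltn_trans (isT : 1 < 3) hn).
pose o2 : 'I_n := Ordinal (ltn_trans (isT : 2 < 3) hn).
pose E0 : rel 'I_n := fun a b => (a == o0) && (b == o1) || (a == o1) && (b == o2).
have vE0 : valid_digraph E0.
  split; [|split].
  - by move=> a; rewrite /E0; apply/negP => /orP [] /andP [/eqP -> /eqP e]; move/(congr1 val): e.
  - move=> a b _; rewrite /E0; apply/negP.
    by case/andP => /orP [] /andP [/eqP -> /eqP ->] /orP [] /andP [/eqP e1 /eqP e2];
      move/(congr1 val): e1; move/(congr1 val): e2.
  - move=> a w c; rewrite cwE /E0 => /and4P [h1 h2 h3 h4] /orP [] /andP [/eqP ea /eqP ec];
      subst; exfalso; have := ltn_ord w; have := cdS o0 w; have := cdS o0 o1;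
      have := cdS o1 w; have := cdS o1 o2; move: h4 h1 h2 h3; rewrite /=; lia.
have P0 : 0 < P3 E0.
  rewrite P3E card_gt0; apply/set0Pn; exists (o0, o1, o2); rewrite inE /p3p /E0 /=.
  done.
have := Hmax _ vE0 => hP.
have [a [b eab]] : exists a b, E a b.
  have : 0 < #|S3 E| by rewrite -P3E; lia.
  rewrite card_gt0 => /set0Pn [t]; rewrite inE /p3p => /and5P [_ _ _ h _].
  by exists t.1.1, t.1.2.
have [y [iy niy]] : exists y, iso y /\ ~~ iso (sh y 1).
  case: (pickP (fun y => iso y && ~~ iso (sh y 1))) => [y /andP [h1 h2] | hnone].
    by exists y.
  have iv : iso v by apply/forallP.
  have ik k : iso (sh v k).
    elim: k => [| k IH].
      have -> : sh v 0 = v by apply: val_inj => /=; rewrite addn0 modn_small.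
      done.
    by have := hnone (sh v k); rewrite /= IH sh_succ /= => /negbFE.
  by move: (isoP _ (ik (cdist v a)) b); rewrite sh_cd eab.
have hy1 : sh y 1 != y.
  rewrite ordE; have hy := ltn_ord y; have := shS y (leq_trans (isT : 1 < 4) hn); lia.
have [c ec] : exists c, E (sh y 1) c.
  move: niy; rewrite negb_forall => /existsP [c].
  rewrite negb_and !negbK => /orP [h | h]; first by exists c.
  exfalso.
  have cy : c != y by apply: contraTneq h => ->; move: (isoP _ iy (sh y 1)); case/andP.
  have cy1 : c != sh y 1 by apply: contraTneq h => ->; rewrite Hl.
  have hcw : cw c y (sh y 1).
    rewrite cwE; move: cy cy1 hy1; rewrite !ordE.
    have hs := shS y (leq_trans (isT : 1 < 4) hn); have := cdS c y; have := cdS c (sh y 1).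
    have := ltn_ord c; have := ltn_ord y; lia.
  case/andP: (Hc _ _ _ hcw h) => h1 _.
  by move: (isoP _ iy c); rewrite h1 andbF.
have vE' : valid_digraph (addE E y (sh y 1)).
  apply: valid_add => //; first by rewrite eq_sym.
    by move: (isoP _ iy (sh y 1)); case/andP.
  move=> w; rewrite cwE => /and4P [h1 h2 h3 h4]; exfalso; move: h1 h2 h3 h4.
  have hs := shS y (leq_trans (isT : 1 < 4) hn); have := cdS y w; have := cdS y (sh y 1).
  have := ltn_ord w; have := ltn_ord y; lia.
have := Hmax _ vE'.
suff : P3 E < P3 (addE E y (sh y 1)) by lia.
apply: P3_lt.
have X0 : S3 E :\: S3 (addE E y (sh y 1)) = set0.
  apply/eqP; rewrite -subset0; apply/subsetP => t /X_char [[[e1 e2]|[e1 e2]] [h1 h2]].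
    by move: (isoP _ iy t.1.2); rewrite -e1 h1.
  by move: (isoP _ iy t.1.2); rewrite -e2 h2 andbF.
rewrite X0 cards0 card_gt0; apply/set0Pn; exists (y, sh y 1, c).
have cy : c != y by apply: contraTneq ec => ->; move: (isoP _ iy (sh y 1)); case/andP.
have cy1 : c != sh y 1 by apply: contraTneq ec => ->; rewrite Hl.
have [Eyc Ecy] : ~~ E y c /\ ~~ E c y by move: (isoP _ iy c); case/andP.
have Eyy : E y (sh y 1) = false by move: (isoP _ iy (sh y 1)); case/andP => /negbTE.
apply: inY; rewrite /addE ?(negbTE Eyc) ?(negbTE Ecy) ?(negbTE cy) ?(negbTE cy1) ?Eyy ?eqxx ?ec ?orbT ?andbF //.
- by rewrite eq_sym.
- by rewrite eq_sym.
- by rewrite eq_sym.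
Qed.

Lemma cd_lt n (x y : 'I_n) : cdist x y < n.
Proof. have := cdS x y; have := ltn_ord x; have := ltn_ord y; lia. Qed.

Lemma cd_add n (x y z : 'I_n) :
  cdist x y + cdist y z = cdist x z \/ cdist x y + cdist y z = cdist x z + n.
Proof.
have := cdS x y; have := cdS y z; have := cdS x z.
have := ltn_ord x; have := ltn_ord y; have := ltn_ord z; lia.
Qed.

Lemma cd_sh n (x : 'I_n) j : j < n -> cdist x (sh x j) = j.
Proof. move=> hj; have := shS x hj; have := cdS x (sh x j); have := ltn_ord x; lia. Qed.

Lemma cd_pos n (x y : 'I_n) : x != y -> 0 < cdist x y.
Proof. rewrite ordE; have := cdS x y; have := ltn_ord x; have := ltn_ord y; lia. Qed.

Lemma cd_neq n (x y : 'I_n) : 0 < cdist x y -> x != y.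
Proof. rewrite ordE; have := cdS x y; have := ltn_ord x; have := ltn_ord y; lia. Qed.

Lemma cd_sym n (x y : 'I_n) : x != y -> cdist x y + cdist y x = n.
Proof. rewrite ordE; have := cdS x y; have := cdS y x; have := ltn_ord x; have := ltn_ord y; lia. Qed.

Lemma cwI n (x y z : 'I_n) : 0 < cdist x y -> 0 < cdist y z -> 0 < cdist x z ->
  cdist x y < cdist x z -> cw x y z.
Proof.
move=> h1 h2 h3 h4; rewrite /cw (cd_neq h1) (cd_neq h2) (cd_neq h3) /=; exact: h4.
Qed.

Lemma Lz n (hn : 4 <= n) (u v : 'I_n) : u != v -> 2 <= cdist u v -> cdist u v <= cdist v u ->
  let z := sh u n.-1 in
  [/\ z != u, z != v, cdist z u < cdist u v, cw u v z & cw z u v].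
Proof.
move=> huv h2 h3 z.
have hn1 : n.-1 < n by lia.
have e1 : cdist u z = n.-1 by apply: cd_sh.
have s1 := cd_sym huv.
have uz : u != z by apply: cd_neq; lia.
have zu : z != u by rewrite eq_sym.
have s2 := cd_sym zu.
have a1 := cd_add z u v; have b1 := cd_lt z v.
have zv : z != v by apply: cd_neq; lia.
have a2 := cd_add u v z; have b2 := cd_lt v z.
split => //; first lia.
- apply: cwI; lia.
- apply: cwI; lia.
Qed.

Lemma Lc n (u v b : 'I_n) : u != v -> 0 < cdist u b -> cdist u b < cdist u v ->
  cdist u v <= cdist v u ->
  let c := sh v (cdist u b) in
  [/\ c != u, c != v, cdist v c < cdist u v, cw c u v & cw u v c].
Proof.
move=> huv h1 h2 h3 c.
have hb := cd_lt u b.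
have e1 : cdist v c = cdist u b by apply: cd_sh.
have s1 := cd_sym huv.
have vc : v != c by apply: cd_neq; lia.
have a1 := cd_add u v c; have b1 := cd_lt u c.
have uc : u != c by apply: cd_neq; lia.
have s2 := cd_sym uc; have s3 := cd_sym vc.
split; first by rewrite eq_sym.
- by rewrite eq_sym.
- lia.
- apply: cwI; lia.
- apply: cwI; lia.
Qed.

Lemma cd_inj n (x y z : 'I_n) : cdist x y = cdist x z -> y = z.
Proof.
move=> e; apply: val_inj => /=; move: e.
have := cdS x y; have := cdS x z; have := ltn_ord x; have := ltn_ord y; have := ltn_ord z; lia.
Qed.

Lemma Linj n (u v b1 b2 : 'I_n) : sh v (cdist u b1) = sh v (cdist u b2) -> b1 = b2.
Proof.
move=> e; apply: (@cd_inj _ u).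
by rewrite -(cd_sh v (cd_lt u b1)) -(cd_sh v (cd_lt u b2)) e.
Qed.
Unset Implicit Arguments.

Theorem mainTheorem7 (n : nat) (hn : 4 <= n) (E : rel 'I_n) (u v : 'I_n) :
  optimal E -> shortest_nonedge E u v ->
  exists w : 'I_n, E v w && E w u.
Proof.
move=> Hopt [Hne Hmin].
case: (pickP (fun w => E v w && E w u)) => [w hw | Hno]; first by exists w.
exfalso.
have Hopt' := Hopt; move: Hopt' => [Hv [Hmax _]]; have Hv' := Hv; move: Hv' => [Hl [H2 Hc]].
move: (Hne); rewrite /nonedge => /and3P [huv nEuv nEvu].
have Hno' w : E v w -> E w u -> False by move=> h1 h2; move: (Hno w); rewrite /= h1 h2.
have hvu : cdist u v <= cdist v u by apply: Hmin; rewrite /nonedge eq_sym huv nEuv nEvu.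
set al := cdist u v in Hmin hvu *.
have sym_uv := cd_sym huv.
have alpos : 0 < al by apply: cd_pos.
have aln : al < n by apply: cd_lt.
have K x y : x != y -> cdist x y < al -> E x y || E y x.
  move=> hxy hlt; case: (boolP (E x y || E y x)) => // h.
  have := Hmin x y; rewrite /nonedge hxy -negb_or h => /(_ isT); lia.
have Bt w : cw u w v -> E u w && E w v.
  case/and4P => h1 h2 h3 h4.
  have s1 := cd_sym h1; have s2 := cd_sym h2.
  have a1 := cd_add u w v; have a2 := cd_add v u w; have l1 := cd_lt v w; have l2 := cd_lt w v.
  have p1 := cd_pos h1; have p2 := cd_pos h2.
  have Euw : E u w.
    case/orP: (K u w h1 h4) => // ewu; exfalso.
    have hcw : cw w v u by apply: cwI; lia.
    by case/andP: (Hc _ _ _ hcw ewu) => _ evu; rewrite evu in nEvu.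
  have Ewv : E w v.
    case/orP: (K w v h2 ltac:(lia)) => // evw; exfalso.
    have hcw : cw v u w by apply: cwI; lia.
    by case/andP: (Hc _ _ _ hcw evw) => evu _; rewrite evu in nEvu.
  by rewrite Euw Ewv.
have vE' : valid_digraph (addE E u v) by apply: valid_add.
have := Hmax _ vE'.
suff : P3 E < P3 (addE E u v) by lia.
apply: P3_lt.
set X := S3 E :\: S3 (addE E u v).
set Y := S3 (addE E u v) :\: S3 E.
have Xf t : t \in X -> [/\ t.1.1 = u, t.2 = v, 0 < cdist u t.1.2 & cdist u t.1.2 < al].
  move/X_char => [[[e1 e2] | [e1 e2]] [h1 h2]]; last first.
    by exfalso; apply: (Hno' t.1.2); rewrite -?e1 -?e2.
  rewrite e1 e2 in h1 h2; split => //.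
  - have hbu : u != t.1.2 by apply: contraTneq h1 => <-; rewrite Hl.
    exact: cd_pos.
  - have hbu : u != t.1.2 by apply: contraTneq h1 => <-; rewrite Hl.
    have hbv : t.1.2 != v by apply: contraTneq h2 => ->; rewrite Hl.
    case: (ltnP (cdist u t.1.2) al) => // hge; exfalso.
    have hne : cdist u t.1.2 != al by apply: contra hbv => /eqP /cd_inj ->.
    have hcw : cw u v t.1.2.
      apply: cwI => //; try exact: cd_pos; try lia.
      by apply: cd_pos; rewrite eq_sym.
    by case/andP: (Hc _ _ _ hcw h1) => e _; rewrite e in nEuv.
case: (leqP al 1) => hal.
  have X0 : X = set0.
    apply/eqP; rewrite -subset0; apply/subsetP => t /Xf [_ _ h1 h2]; lia.
  rewrite X0 cards0 card_gt0.
  case: (pickP (E v)) => [c evc | nvc].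
    apply/set0Pn; exists (u, v, c).
    have lc := ltn_ord c.
    have cv : c != v by apply: contraTneq evc => ->; rewrite Hl.
    have cu : c != u by apply: contraTneq evc => ->.
    have nEuc : E u c = false.
      apply/negP => euc.
      have hne : cdist u c != al by apply: contra cv => /eqP /cd_inj ->.
      have hcw : cw u v c.
        have p1 : 0 < cdist u c by apply: cd_pos; rewrite eq_sym.
        have p2 : 0 < cdist v c by apply: cd_pos; rewrite eq_sym.
        apply: cwI => //; lia.
      by case/andP: (Hc _ _ _ hcw euc) => e _; rewrite e in nEuv.
    have nEcu : E c u = false by apply/negP => ecu; exact: (Hno' c).
    apply: inY; rewrite /addE ?nEuc ?nEcu ?evc ?eqxx ?(negbTE cu) ?(negbTE cv) ?(negbTE huv) ?orbT ?andbF //.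
    - by rewrite eq_sym.
    - by rewrite eq_sym.
    - by rewrite (negbTE nEuv).
  case: (pickP (E^~ u)) => [a eau | nau].
    apply/set0Pn; exists (a, u, v).
    have la := ltn_ord a.
    have au : a != u by apply: contraTneq eau => ->; rewrite Hl.
    have av : a != v by apply: contraTneq eau => ->.
    have nEav : E a v = false.
      apply/negP => eav.
      have := cd_add a u v; have := cd_lt a u; have := cd_pos au; have := cd_pos av.
      move=> p1 p2 l1 a1.
      have hcw : cw a u v by apply: cwI => //; lia.
      by case/andP: (Hc _ _ _ hcw eav) => _ e; rewrite e in nEuv.
    have nEva : E v a = false by apply/negP => eva; exact: (Hno' a).
    apply: inY; rewrite /addE ?nEav ?nEva ?eau ?eqxx ?(negbTE au) ?(negbTE av) ?orbT ?andbF //;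
      rewrite ?eq_sym //; by rewrite (negbTE nEuv) andbF.
  exfalso; apply: (iso_contra hn Hopt (v := v)) => x.
  rewrite nvc /=; apply/negP => exv.
  have lx := ltn_ord x.
  have xv : x != v by apply: contraTneq exv => ->; rewrite Hl.
  have xu : x != u by apply: contraTneq exv => ->.
  have := cd_add x u v; have := cd_lt x u; have := cd_pos xu; have := cd_pos xv.
  move=> p1 p2 l1 a1.
  have hcw : cw x u v by apply: cwI => //; lia.
  by case/andP: (Hc _ _ _ hcw exv) => e _; rewrite nau in e.
have [zu zv zul cwuvz cwzuv] := Lz hn huv hal hvu.
set z := sh u n.-1 in zu zv zul cwuvz cwzuv.
have zuo : (z == u) = false := negbTE zu.
have zvo : (z == v) = false := negbTE zv.
have Ezu : E z u.
  case/orP: (K z u zu zul) => // euz; exfalso.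
  by case/andP: (Hc _ _ _ cwuvz euz) => e _; rewrite e in nEuv.
have nEzv : E z v = false.
  apply/negP => ezv.
  by case/andP: (Hc _ _ _ cwzuv ezv) => _ e; rewrite e in nEuv.
have nEvz : E v z = false by apply/negP => evz; exact: (Hno' z).
have zY : (z, u, v) \in Y.
  apply: inY; rewrite /addE ?Ezu ?nEzv ?nEvz ?eqxx ?zuo ?zvo ?(negbTE huv) ?orbT ?andbF //.
pose phi (t : 'I_n * 'I_n * 'I_n) := (u, v, sh v (cdist u t.1.2)).
have phiY t : t \in X -> phi t \in Y :\ (z, u, v).
  move=> tX; have [_ _ h1 h2] := Xf t tX.
  have [cu cv lvc cwcuv cwuvc] := Lc huv h1 h2 hvu.
  set c := sh v (cdist u t.1.2) in cu cv lvc cwcuv cwuvc.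
  have cuo : (c == u) = false := negbTE cu.
  have cvo : (c == v) = false := negbTE cv.
  have Evc : E v c.
    case/orP: (K v c ltac:(by rewrite eq_sym) lvc) => // ecv; exfalso.
    by case/andP: (Hc _ _ _ cwcuv ecv) => _ e; rewrite e in nEuv.
  have nEuc : E u c = false.
    apply/negP => euc.
    by case/andP: (Hc _ _ _ cwuvc euc) => e _; rewrite e in nEuv.
  have nEcu : E c u = false by apply/negP => ecu; exact: (Hno' c).
  rewrite in_setD1 andbC; apply/andP; split.
    apply: inY; rewrite /addE ?Evc ?nEuc ?nEcu ?eqxx ?cuo ?cvo ?(negbTE huv) ?orbT ?andbF //.
    - by rewrite eq_sym.
    - by rewrite eq_sym.
    - by rewrite (negbTE nEuv).
  rewrite /phi; apply/negP => /eqP [_ e2 _]; by rewrite e2 eqxx in huv.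
have phiI : {in X &, injective phi}.
  move=> [[a1 b1] c1] [[a2 b2] c2] t1X t2X.
  have [/= -> -> _ _] := Xf _ t1X; have [/= -> -> _ _] := Xf _ t2X.
  by rewrite /phi => /(congr1 (fun t => t.2)) /= /Linj ->.
have h1 := card_in_imset phiI.
have h2 : #|phi @: X| <= #|Y :\ (z, u, v)|.
  apply: subset_leq_card; apply/subsetP => s /imsetP [t tX ->]; exact: phiY.
have h3 := cardsD1 (z, u, v) Y; rewrite zY in h3.
by rewrite -h1 h3 /= ltnS.
Qed.
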